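(* Let $\mathcal{F}$ be an argumentation framework and $S\subseteq A_{\mathcal{F}}$. Then $S\in\mathit{tfcf2}(\mathcal{F})$ if and only if $S$ is conflict-free and $S$ is a naive extension of $[[\mathcal{F}\setminus\Delta_{\mathcal{F},S}]]$.
   Context: An argumentation framework (AF) is $\mathcal{F}=(A_{\mathcal{F}},R_{\mathcal{F}})$ with $R_{\mathcal{F}}\subseteq A_{\mathcal{F}}\times A_{\mathcal{F}}$; $a\rightarrow b$ means $(a,b)\in R_{\mathcal{F}}$. $\mathcal{F}|_B=(A_{\mathcal{F}}\cap B,R_{\mathcal{F}}\cap(B\times B))$. Conflict-free: no $a,b\in S$ with $a\rightarrow b$; naive extension: $\subseteq$-maximal conflict-free set. $\mathrm{SCC}(a)$: set of $b$ with directed attack paths (possibly length 0) from $a$ to $b$ and back. $D_S(X)=\{b\in X:\exists a\in S\setminus X,\ a\rightarrow b\}$. $\mathit{tfcf2}$: $C^0_S(a)=\mathrm{SCC}(a)$; $C^{\alpha+1}_S(a)$ = the strongly connected component of $a$ in $\mathcal{F}|_{C^\alpha_S(a)\setminus D_S(C^\alpha_S(a))}$ (empty if $a$ is not in that set); for limit $\lambda$, $C^\lambda_S(a)$ = the component of $a$ in $\mathcal{F}|_{\bigcap_{\alpha<\lambda}C^\alpha_S(a)}$; $\alpha_S(a)$ = least $\alpha$ with $a\notin C^\alpha_S(a)$ or $C^{\alpha+1}_S(a)=C^\alpha_S(a)$. $S\in\mathit{tfcf2}(\mathcal{F})$ iff $S$ is conflict-free and for each $a\in A_{\mathcal{F}}$,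 either $a\notin C^{\alpha_S(a)}_S(a)$ or $S\cap C^{\alpha_S(a)}_S(a)$ is a naive extension of $\mathcal{F}|_{C^{\alpha_S(a)}_S(a)}$. $b$ is reachable from $a$ modulo $B$, written $a\Rightarrow^B_{\mathcal{F}}b$, if there is a directed attack path from $a$ to $b$ in $\mathcal{F}|_B$. For $D\subseteq A_{\mathcal{F}}$, $\Delta_{\mathcal{F},S}(D)=\{a\in A_{\mathcal{F}}:\exists b\in S\,(b\rightarrow a\text{ and not }a\Rightarrow^{A_{\mathcal{F}}\setminus D}_{\mathcal{F}}b)\}$. This operator on subsets of $A_{\mathcal{F}}$ is monotone; $\Delta_{\mathcal{F},S}$ (as a set) denotes its least fixed point. $\mathcal{F}\setminus\Delta$ denotes $\mathcal{F}|_{A_{\mathcal{F}}\setminus\Delta}$. For an AF $\mathcal{G}$, the separation $[[\mathcal{G}]]$ is obtained from $\mathcal{G}$ by deleting all attacks between arguments lying in different strongly connected components of $\mathcal{G}$. *)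

(* Defs.v *)
(* sets are predicates T -> Prop; argumentation frameworks may be infinite. *)

Record AF (T : Type) : Type := mkAF {
  args : T -> Prop;
  att  : T -> T -> Prop        (* R_F : att a b  means  a -> b *)
}.
Arguments mkAF {T}.
Arguments args {T}.
Arguments att {T}.

Definition wf_AF {T} (F : AF T) : Prop :=
  forall a b, att F a b -> args F a /\ args F b.

Definition subset {T} (X Y : T -> Prop) : Prop := forall x, X x -> Y x.

Definition restrict {T} (F : AF T) (B : T -> Prop) : AF T :=
  mkAF (fun x => args F x /\ B x) (fun x y => att F x y /\ B x /\ B y).

Definition conflict_free {T} (F : AF T) (S : T -> Prop) : Prop :=
  subset S (args F) /\ (forall a b, S a -> S b -> att F a b -> False).

Definition naive {T} (F : AF T) (S : T -> Prop) : Prop :=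
  conflict_free F S /\
  (forall S', conflict_free F S' -> subset S S' -> subset S' S).

Inductive path {T} (F : AF T) : T -> T -> Prop :=
| path_refl a : args F a -> path F a a
| path_step a c b : att F a c -> path F c b -> path F a b.

(* SCC(a) in F; empty if a is not an argument of F *)
Definition SCC {T} (F : AF T) (a : T) : T -> Prop :=
  fun b => path F a b /\ path F b a.

Definition DS {T} (F : AF T) (S X : T -> Prop) : T -> Prop :=
  fun b => X b /\ exists a, S a /\ ~ X a /\ att F a b.

(* successor step: C^{alpha+1} from C^alpha *)
Definition next_comp {T} (F : AF T) (S : T -> Prop) (a : T) (X : T -> Prop)
  : T -> Prop :=
  SCC (restrict F (fun x => X x /\ ~ DS F S X x)) a.

(* The transfinite sequence (C^alpha_S(a))_alpha, encoded ordinal-free as the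
   least family of sets containing C^0 = SCC(a), closed under the successor
   step, and closed under the limit step (component of a in the intersection
   of a family of earlier stages). *)
Inductive stage {T} (F : AF T) (S : T -> Prop) (a : T) : (T -> Prop) -> Prop :=
| stage0 : stage F S a (SCC F a)
| stageS X : stage F S a X -> stage F S a (next_comp F S a X)
| stageL (Fam : (T -> Prop) -> Prop) :
    (forall X, Fam X -> stage F S a X) ->
    stage F S a (SCC (restrict F (fun x => forall X, Fam X -> X x)) a).

(* tfcf2 semantics: the stage C^{alpha_S(a)} is the (unique) stage X with
   a \notin X or C^{alpha+1} = C^alpha, i.e. next_comp X = X. *)
Definition tfcf2 {T} (F : AF T) (S : T -> Prop) : Prop :=
  conflict_free F S /\
  forall a, args F a ->
    forall X, stage F S a X ->
      (~ X a \/ (forall x, next_comp F S a X x <-> X x)) ->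
      (~ X a \/ naive (restrict F X) (fun x => S x /\ X x)).

Definition reach_mod {T} (F : AF T) (B : T -> Prop) (a b : T) : Prop :=
  path (restrict F B) a b.

Definition Delta_op {T} (F : AF T) (S D : T -> Prop) : T -> Prop :=
  fun a => args F a /\
    exists b, S b /\ att F b a /\
      ~ reach_mod F (fun x => args F x /\ ~ D x) a b.

(* its least fixed point (Knaster--Tarski: intersection of all pre-fixed points) *)
Definition Delta {T} (F : AF T) (S : T -> Prop) : T -> Prop :=
  fun x => forall D, subset D (args F) -> subset (Delta_op F S D) D -> D x.

Definition remove {T} (F : AF T) (Dl : T -> Prop) : AF T :=
  restrict F (fun x => args F x /\ ~ Dl x).

Definition separation {T} (G : AF T) : AF T :=
  mkAF (args G) (fun x y => att G x y /\ SCC G x y).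

(* Main.v *)
Require Import Defs.
From Stdlib Require Import Classical.

Lemma path_trans {T} (G : AF T) u v w : path G u v -> path G v w -> path G u w.
Proof. induction 1; intros; auto. eapply path_step; eauto. Qed.

Lemma path_sub {T} (G1 G2 : AF T) :
  (forall x, args G1 x -> args G2 x) -> (forall x y, att G1 x y -> att G2 x y) ->
  forall u v, path G1 u v -> path G2 u v.
Proof. intros Ha Hr u v H; induction H. apply path_refl; auto. eapply path_step; eauto. Qed.

Lemma wf_restrict {T} (F : AF T) B : wf_AF F -> wf_AF (restrict F B).
Proof. unfold wf_AF; simpl; intros HF a b [Hab [Ha Hb]]; destruct (HF a b Hab); tauto. Qed.

Lemma path_args {T} (G : AF T) : wf_AF G -> forall u v, path G u v -> args G u /\ args G v.
Proof. intros HG u v H; induction H. tauto. destruct (HG _ _ H); tauto. Qed.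

Lemma path_restr {T} (F : AF T) B u v : path (restrict F B) u v -> B u /\ B v.
Proof. induction 1; simpl in *; tauto. Qed.

Lemma path_in_scc {T} (G : AF T) : wf_AF G -> forall u v, path G u v -> path G v u ->
  path (restrict G (fun z => path G u z /\ path G z u)) u v.
Proof.
  intros HG u v H; induction H as [a Ha | a c b Hac Hcb IH]; intros Hba.
  - apply path_refl. simpl. split; [exact Ha|]. split; apply path_refl; auto.
  - assert (Hc : args G c) by (apply (HG a c Hac)).
    assert (Hac' : path G a c) by (eapply path_step; [exact Hac | apply path_refl; exact Hc]).
    assert (Hca : path G c a) by (eapply path_trans; eauto).
    assert (Hbc : path G b c) by (eapply path_trans; eauto).
    specialize (IH Hbc).
    assert (Ha : args G a) by (apply (HG a c Hac)).
    eapply path_step.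
    + simpl. split; [exact Hac|]. split; split; auto; apply path_refl; auto.
    + eapply path_sub; [ | | exact IH]; simpl.
      * intros x [Hx [H1 H2]]; split; auto; split; eapply path_trans; eauto.
      * intros x y [Hxy [[H1 H2] [H3 H4]]]; split; auto;
          split; split; eapply path_trans; eauto.
Qed.

Lemma scc_conn {T} (G : AF T) a x y : wf_AF G -> SCC G a x -> SCC G a y ->
  path (restrict G (SCC G a)) x y.
Proof.
  intros HG [Hax Hxa] [Hay Hya].
  assert (Hxy : path G x y) by (eapply path_trans; eauto).
  assert (Hyx : path G y x) by (eapply path_trans; eauto).
  pose proof (path_in_scc G HG x y Hxy Hyx) as H.
  eapply path_sub; [ | | exact H]; simpl; unfold SCC.
  - intros z [Hz [H1 H2]]; split; [exact Hz|];
      split; [exact (path_trans _ _ x _ Hax H1) | exact (path_trans _ _ x _ H2 Hxa)].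
  - intros z w [Hzw [[H1 H2] [H3 H4]]]; split; [exact Hzw|];
      split; split; first [exact (path_trans _ _ x _ Hax H1) | exact (path_trans _ _ x _ H2 Hxa)
        | exact (path_trans _ _ x _ Hax H3) | exact (path_trans _ _ x _ H4 Hxa)].
Qed.

Lemma delta_mono {T} (F : AF T) S D1 D2 : subset D1 D2 ->
  subset (Delta_op F S D1) (Delta_op F S D2).
Proof.
  intros H x [Hx [b [Hb [Hbx Hn]]]]. split; auto. exists b. split; [exact Hb|]. split; [exact Hbx|].
  intro Hr; apply Hn. unfold reach_mod in *.
  eapply path_sub; [ | | exact Hr]; simpl.
  - intros z [Hz [Hz' Hn2]]; split; auto; split; auto.
  - intros z w [Hzw [[Hz Hnz] [Hw Hnw]]]; repeat split; auto.
Qed.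

Lemma delta_post {T} (F : AF T) S : subset (Delta_op F S (Delta F S)) (Delta F S).
Proof.
  intros x Hx D HD Hpre. apply Hpre. eapply delta_mono; [|exact Hx].
  intros y Hy. apply Hy; auto.
Qed.

Lemma delta_pre {T} (F : AF T) S : subset (Delta F S) (Delta_op F S (Delta F S)).
Proof.
  intros x Hx. apply Hx.
  - intros y [Hy _]; auto.
  - apply delta_mono. apply delta_post.
Qed.

Definition fixedX {T} (F : AF T) S a X := forall x, next_comp F S a X x <-> X x.

Lemma fixed_disj {T} (F : AF T) S a X : wf_AF F -> fixedX F S a X ->
  forall y, X y -> ~ Delta F S y.
Proof.
  intros HF Hfix y Hy Hd.
  set (P := fun z => args F z /\ ~ X z).
  assert (Hpre : subset (Delta_op F S P) P).
  { intros z [Hz [b [Hb [Hbz Hn]]]]. split; auto. intro Hxz.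
    destruct (classic (X b)) as [Hxb|Hxb].
    - apply Hn. unfold reach_mod.
      destruct (proj2 (Hfix z) Hxz) as [Haz Hza].
      destruct (proj2 (Hfix b) Hxb) as [Hab Hba].
      apply path_sub with (G1 := restrict F (fun x => X x /\ ~ DS F S X x)).
      + simpl; unfold P; intros w [Hw [Hw1 Hw2]]; tauto.
      + simpl; unfold P; intros w1 w2 [H [[H1 _] [H2 _]]].
        destruct (HF _ _ H); tauto.
      + eapply path_trans; eauto.
    - destruct (proj2 (Hfix z) Hxz) as [Haz _]. apply path_restr in Haz.
      destruct Haz as [_ [_ HnD]]. apply HnD. split; auto. exists b; auto. }
  assert (HP : P y) by (apply (Hd P); [intros w [Hw _]; auto | exact Hpre]).
  destruct HP; contradiction.
Qed.

Lemma fixed_sub_K {T} (F : AF T) S a X : wf_AF F -> fixedX F S a X ->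
  subset X (SCC (remove F (Delta F S)) a).
Proof.
  intros HF Hfix x Hx. destruct (proj2 (Hfix x) Hx) as [H1 H2].
  pose proof (fixed_disj F S a X HF Hfix) as Hd.
  split; (eapply path_sub; [ | | first [exact H1 | exact H2]]); simpl.
  1,3: intros w [Hw [Hw1 Hw2]]; split; auto.
  all: intros w1 w2 [H [[H1' _] [H2' _]]]; destruct (HF _ _ H); repeat split; auto.
Qed.

Lemma scc_into {T} (F : AF T) S a B : wf_AF F ->
  (forall z, SCC (remove F (Delta F S)) a z -> B z) ->
  subset (SCC (remove F (Delta F S)) a) (SCC (restrict F B) a).
Proof.
  intros HF HB k Hk.
  assert (HG : wf_AF (remove F (Delta F S))) by (apply wf_restrict; auto).
  assert (Ha : SCC (remove F (Delta F S)) a a).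
  { destruct (path_args _ HG _ _ (proj1 Hk)) as [Ha _]. split; apply path_refl; auto. }
  split; (eapply path_sub; [ | | first [exact (scc_conn _ _ _ _ HG Ha Hk) | exact (scc_conn _ _ _ _ HG Hk Ha)]]); simpl.
  1,3: intros w [[Hw _] Hk']; split; auto.
  all: intros w1 w2 [[H _] [H1 H2]]; repeat split; auto.
Qed.

Lemma K_sub {T} (F : AF T) S a X : wf_AF F -> stage F S a X ->
  subset (SCC (remove F (Delta F S)) a) X.
Proof.
  intros HF HX.
  assert (HG : wf_AF (remove F (Delta F S))) by (apply wf_restrict; auto).
  induction HX as [ | X HX IH | Fam HFam IH].
  - intros k [H1 H2]. split; (eapply path_sub; [ | | first [exact H1 | exact H2]]); simpl.
    1,3: intros w [Hw _]; auto.
    all: intros w1 w2 [H _]; auto.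
  - apply scc_into; auto. intros z Hz. split; [apply IH; auto|].
    intros [_ [b [Hb [Hnb Hbz]]]].
    destruct (path_args _ HG _ _ (proj1 Hz)) as [_ [Hzf [_ Hzd]]].
    apply Hzd. apply delta_post. split; auto. exists b. split; auto. split; auto.
    intro Hr. unfold reach_mod in Hr. apply Hnb. apply IH.
    destruct (path_args _ HG _ _ Hr) as [_ Hbg].
    assert (Hbz' : path (remove F (Delta F S)) b z).
    { eapply path_step; [ | apply path_refl; simpl; auto].
      simpl in *. repeat split; tauto. }
    destruct Hz as [Haz Hza].
    split; eapply path_trans; eauto.
  - apply scc_into; auto. intros z Hz Y HY. apply (IH Y HY); auto.
Qed.

Definition fin {T} (F : AF T) S a :=
  SCC (restrict F (fun x => forall X, stage F S a X -> X x)) a.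

Lemma fin_stage {T} (F : AF T) S a : stage F S a (fin F S a).
Proof. apply (stageL F S a (fun X => stage F S a X)). auto. Qed.

Lemma fin_fixed {T} (F : AF T) S a : fixedX F S a (fin F S a).
Proof.
  intro x. split.
  - intros [H1 _]. apply path_restr in H1. tauto.
  - intros [H1 _]. apply path_restr in H1. destruct H1 as [_ H].
    apply H. apply stageS. apply fin_stage.
Qed.

Theorem theorem8 (T : Type) (F : AF T) (HF : wf_AF F)
  (S : T -> Prop) (HS : subset S (args F)) :
  tfcf2 F S <->
  (conflict_free F S /\ naive (separation (remove F (Delta F S))) S).
Proof.
  assert (HG : wf_AF (remove F (Delta F S))) by (apply wf_restrict; auto).
  split.
  - intros [Hcf Htf]. split; [exact Hcf|].
    assert (SG : forall s, S s -> ~ Delta F S s).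
    { intros s Hs Hd. apply delta_pre in Hd.
      destruct Hd as [_ [b [Hb [Hbs _]]]]. exact (proj2 Hcf b s Hb Hs Hbs). }
    split.
    + split.
      * intros s Hs; simpl. split; [apply HS; auto|]. split; [apply HS; auto| apply SG; auto].
      * intros u v Hu Hv [[Huv _] _]. exact (proj2 Hcf u v Hu Hv Huv).
    + intros S' [HS'1 HS'2] Hsub x Hx.
      destruct (HS'1 x Hx) as [Hxa Hxg].
      assert (HK : SCC (remove F (Delta F S)) x x) by (split; apply path_refl; simpl; auto).
      assert (HZx : fin F S x x) by (exact (K_sub F S x _ HF (fin_stage F S x) x HK)).
      pose proof (fixed_sub_K F S x _ HF (fin_fixed F S x)) as Zsub.
      destruct (Htf x Hxa (fin F S x) (fin_stage F S x) (or_intror (fin_fixed F S x)))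
        as [Hn | [Hcfz Hmax]]; [contradiction|].
      assert (Hc : conflict_free (restrict F (fin F S x)) (fun z => S' z /\ fin F S x z)).
      { split.
        - intros z [Hz1 Hz2]; simpl. split; [apply (HS'1 z Hz1)| exact Hz2].
        - intros u v [Hu1 Hu2] [Hv1 Hv2] [Huv _]. apply (HS'2 u v Hu1 Hv1).
          pose proof (Zsub u Hu2) as [Hxu Hux]. pose proof (Zsub v Hv2) as [Hxv Hvx].
          destruct (path_args _ HG _ _ Hxu) as [_ Hug].
          destruct (path_args _ HG _ _ Hxv) as [_ Hvg].
          simpl in *. split; [tauto|].
          split; eapply path_trans; eauto. }
      exact (proj1 (Hmax _ Hc (fun z Hz => conj (Hsub z (proj1 Hz)) (proj2 Hz)) x (conj Hx HZx))).
  - intros [Hcf [[HSg HSatt] Hmax]]. split; [exact Hcf|].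
    intros a Ha X HX Hor.
    destruct (classic (X a)) as [HXa|HXa]; [|left; auto]. right.
    destruct Hor as [Hn|Hfix]; [contradiction|].
    pose proof (fixed_sub_K F S a X HF Hfix) as HXK.
    pose proof (K_sub F S a X HF HX) as HKX.
    split.
    + split.
      * intros z [Hz1 Hz2]; simpl; split; auto.
      * intros u v [Hu _] [Hv _] [Huv _]. exact (proj2 Hcf u v Hu Hv Huv).
    + intros S' [HS'1 HS'2] Hsub z Hz.
      assert (key : forall w, (S w \/ S' w) -> X w -> S' w).
      { intros w [Hw|Hw] Hxw; [apply Hsub; split; auto | exact Hw]. }
      assert (both : forall u v, S' u -> SCC (remove F (Delta F S)) u v ->
                 X u /\ X v).
      { intros u v Hu [Huv Hvu]. destruct (HS'1 u Hu) as [_ Hxu].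
        split; auto. destruct (HXK u Hxu) as [Hau Hua]. apply HKX.
        split; eapply path_trans; eauto. }
      assert (Hc : conflict_free (separation (remove F (Delta F S))) (fun w => S w \/ S' w)).
      { split.
        - intros w [Hw|Hw]; [apply HSg; auto|].
          destruct (HS'1 w Hw) as [_ Hxw]. simpl.
          exact (proj2 (path_args _ HG _ _ (proj1 (HXK w Hxw)))).
        - intros u v Hu Hv [Huv Hscc].
          destruct (classic (S' u \/ S' v)) as [H'|H'].
          + assert (Hxuv : X u /\ X v).
            { destruct H' as [H'|H']; [apply both; auto|].
              destruct Hscc as [H1 H2]. destruct (both v u H' (conj H2 H1)); auto. }
            destruct Hxuv as [Hxu Hxv].
            apply (HS'2 u v (key u Hu Hxu) (key v Hv Hxv)).
            simpl in Huv. simpl. tauto.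
          + destruct Hu as [Hu|Hu]; [|tauto]. destruct Hv as [Hv|Hv]; [|tauto].
            exact (HSatt u v Hu Hv (conj Huv Hscc)). }
      assert (HSz : S z) by (exact (Hmax _ Hc (fun w Hw => or_introl Hw) z (or_intror Hz))).
      split; [exact HSz| exact (proj2 (HS'1 z Hz))].
Qed.
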